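(* Let $R$ be a commutative ring and let $I, I_1,\ldots,I_n$ be ideals of $R$ with $I\subseteq \bigcup_{k=1}^{n} I_k$. If all but at most two of the ideals $I_1,\ldots,I_n$ are radical ideals, then $I\subseteq I_k$ for some $k$.
   Context: All rings are commutative with $1\neq 0$. An ideal $J$ is radical if $J=\sqrt{J}$. *)

(* Defs.v *)
From mathcomp Require Import all_boot all_order all_algebra.
Set Implicit Arguments. Unset Strict Implicit. Unset Printing Implicit Defensive.
Import GRing.Theory.
Local Open Scope ring_scope.

(* An ideal of a commutative ring R, as a subset (predicate) of R.
   The whole ring is allowed (no properness requirement). *)
Definition is_ideal (R : comNzRingType) (J : R -> Prop) : Prop :=
  [/\ J 0,
      (forall x y, J x -> J y -> J (x - y)) &
      (forall r x, J x -> J (r * x))].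

Definition radical (R : comNzRingType) (J : R -> Prop) : R -> Prop :=
  fun x => exists n : nat, J (x ^+ n).

Definition is_radical (R : comNzRingType) (J : R -> Prop) : Prop :=
  forall x, J x <-> radical J x.

(* Main.v *)
Require Import Defs.
From mathcomp Require Import all_boot all_order all_algebra.
From mathcomp Require Import boolp classical_sets ring zify.
Set Implicit Arguments. Unset Strict Implicit.
Import GRing.Theory.
Local Open Scope ring_scope.

Definition is_prime (R : comNzRingType) (J : R -> Prop) : Prop :=
  forall a b, J (a * b) -> J a \/ J b.
Lemma NNPP (P : Prop) : ~ ~ P -> P.
Proof. by move=> h; apply: contrapT. Qed.

Section A.
Variable R : comNzRingType.

Lemma ideal_add (K : R -> Prop) x y : is_ideal K -> K x -> K y -> K (x + y).
Proof.
case=> h0 hs hm Kx Ky; rewrite -[y]opprK; apply: hs => //.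
by rewrite -mulN1r; apply: hm.
Qed.

Lemma ideal_mulr (K : R -> Prop) x r : is_ideal K -> K x -> K (x * r).
Proof. by case=> _ _ hm Kx; rewrite mulrC; apply: hm. Qed.

Lemma prime_prod (K : R -> Prop) (I : eqType) (s : seq I) (P : pred I) F :
  is_prime K -> K (\prod_(i <- s | P i) F i) ->
  K 1 \/ exists i, [/\ i \in s, P i & K (F i)].
Proof.
move=> hp; elim: s => [|i s IH]; first by rewrite big_nil; left.
rewrite big_cons; case: ifP => Pi.
- case/hp => [Ki|/IH [h|[j [js Pj Kj]]]].
  + by right; exists i; rewrite mem_head.
  + by left.
  + by right; exists j; rewrite inE js orbT.
- case/IH => [h|[j [js Pj Kj]]]; first by left.
  by right; exists j; rewrite inE js orbT.
Qed.

Lemma bump_lt k j n : (j < n)%N -> (bump k j < n.+1)%N.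
Proof. by rewrite /bump; case: (k <= j)%N => /=; lia. Qed.

Lemma unbump_lt k m n : (k < n.+1)%N -> (m < n.+1)%N -> m != k -> (unbump k m < n)%N.
Proof. by move=> hk hm /eqP hmk; rewrite /unbump; case: ltnP => /= h; lia. Qed.

Lemma avoid (I : R -> Prop) (hI : is_ideal I) : forall n (f : nat -> R -> Prop) (a b : nat),
  (forall j, (j < n)%N -> is_ideal (f j)) ->
  (forall j, (j < n)%N -> j <> a -> j <> b -> is_prime (f j)) ->
  (forall x, I x -> exists2 j, (j < n)%N & f j x) ->
  exists2 j, (j < n)%N & forall x, I x -> f j x.
Proof.
have I0 : I 0 by case: hI.
elim=> [|n IH] f a b hf hp hc; first by case: (hc 0 I0).
case: (pselect (exists k, (k < n.+1)%N /\ forall x, I x -> exists2 j, (j < n)%N & f (bump k j) x)).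
  case=> k [hk hck].
  have [||j jn hj] := IH (fun j => f (bump k j)) (unbump k a) (unbump k b) _ _ hck.
  - by move=> j jn; apply: hf; apply: bump_lt.
  - move=> j jn ja jb; apply: hp; first exact: bump_lt.
    + by move=> e; apply: ja; rewrite -e bumpK.
    + by move=> e; apply: jb; rewrite -e bumpK.
  - by exists (bump k j) => //; apply: bump_lt.
move=> hno.
have hx : forall k, exists x, (k < n.+1)%N ->
    I x /\ forall m, (m < n.+1)%N -> m != k -> ~ f m x.
  move=> k; case: (ltnP k n.+1) => hk; last by exists 0.
  apply: NNPP => hne; apply: hno; exists k; split => // x Ix.
  apply: NNPP => hnot; apply: hne; exists x => _; split => // m hm hmk fm.
  apply: hnot; exists (unbump k m); first exact: unbump_lt hk hm hmk.
  by rewrite unbumpK // inE.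
have [x hxP] := choice hx.
have hxk : forall k, (k < n.+1)%N -> f k (x k).
  move=> k hk; have [Ix hn] := hxP k hk.
  have [m hm fm] := hc _ Ix.
  have [e|ne] := eqVneq m k; first by rewrite e in fm.
  by case: (hn m hm ne).
case: n IH hf hp hc hno hx hxP hxk => [|n] IH hf hp hc hno hx hxP hxk.
  exists 0%N => // y Iy; have [j hj fj] := hc _ Iy.
  by move: fj; have -> : j = 0%N by lia.
exfalso.
case: n IH hf hp hc hno hx hxP hxk => [|n] IH hf hp hc hno hx hxP hxk.
  have [I0x hn0] := hxP 0%N isT.
  have [I1x hn1] := hxP 1%N isT.
  have [m hm fm] := hc _ (ideal_add hI I0x I1x).
  have [e|ne] := eqVneq m 0%N.
  - subst m; apply: (hn1 0%N) => //.
    case: (hf 0%N isT) => _ hs _.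
    by have := hs _ _ fm (hxk 0%N isT); rewrite addrAC subrr add0r.
  - have e1 : m = 1%N by lia.
    subst m; apply: (hn0 1%N) => //.
    case: (hf 1%N isT) => _ hs _.
    have := hs _ _ fm (hxk 1%N isT); by rewrite addrK.
have [k [hk3 [ka kb]]] : exists k, (k < 3)%N /\ k <> a /\ k <> b.
  have [h0|h0] := boolP ((a != 0%N) && (b != 0%N)).
    by exists 0%N; move: h0 => /andP[/eqP ? /eqP ?]; split => //; split => // e; subst.
  have [h1|h1] := boolP ((a != 1%N) && (b != 1%N)).
    by exists 1%N; move: h1 => /andP[/eqP ? /eqP ?]; split => //; split => // e; subst.
  exists 2%N; split => //.
  move: h0 h1; rewrite !negb_and !negbK; lia.
have hkn : (k < n.+3)%N by lia.
pose m0 := if k == 0%N then 1%N else 0%N.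
have hm0 : (m0 < n.+3)%N by rewrite /m0; case: ifP.
have hm0k : m0 != k by rewrite /m0; case: (eqVneq k 0%N) => [->|h] //; rewrite eq_sym.
pose p := \prod_(j < n.+3 | (j : nat) != k) x j.
have pin : forall K, is_ideal K -> forall m, (m < n.+3)%N -> m != k -> K (x m) -> K p.
  move=> K hK m hm hmk Km.
  rewrite /p (bigD1 (Ordinal hm)) //=.
  exact: ideal_mulr.
have [Ik _] := hxP k hkn.
have Ip : I p by apply: (pin _ hI m0 hm0 hm0k); case: (hxP m0 hm0).
have [m hm fm] := hc _ (ideal_add hI Ip Ik).
have [e|ne] := eqVneq m k.
- subst m.
  have fp : f k p.
    case: (hf k hkn) => _ hs _.
    by have := hs _ _ fm (hxk k hkn); rewrite addrK.
  have hpk : is_prime (f k) by apply: hp.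
  case: (prime_prod hpk fp) => [f1|[j [_ jk fj]]].
  + have [_ hn] := hxP m0 hm0.
    apply: (hn k hkn); first by rewrite eq_sym.
    by rewrite -[x m0]mul1r; exact: (ideal_mulr (x m0) (hf k hkn) f1).
  + have [_ hn] := hxP j (ltn_ord j).
    by apply: (hn k hkn) => //; rewrite eq_sym.
- have [_ hn] := hxP k hkn.
  apply: (hn m hm ne).
  have fpm : f m p by apply: (pin _ (hf m hm) m hm ne); apply: hxk.
  case: (hf m hm) => _ hs _.
  have := hs _ _ fm fpm.
  by rewrite addrAC subrr add0r.
Qed.
Definition good (J : R -> Prop) (z : R) (A : R -> Prop) :=
  [/\ is_ideal A, (forall x, J x -> A x) & forall m, ~ A (z ^+ m)].

Lemma exists_prime (J : R -> Prop) (z : R) : is_ideal J ->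
  (forall m, ~ J (z ^+ m)) ->
  exists P, [/\ is_ideal P, (forall x, J x -> P x), is_prime P & ~ P z].
Proof.
move=> hJ hz.
pose Q := fun A : R -> Prop => (exists x, A x) -> good J z A.
have [A [QA maxA]] : exists A, Q A /\ forall B, (A `<` B)%classic -> ~ Q B.
  apply: Zorn_bigcup => F FQ Ftot.
  have gF : forall X x, F X -> X x -> good J z X.
    by move=> X x FX Xx; exact: (FQ _ FX (ex_intro _ x Xx)).
  move=> [u [X0 FX0 X0u]].
  have [[h0 hsub hmul] hJ0 hz0] := gF _ _ FX0 X0u.
  split.
  - split.
    + by exists X0.
    + move=> x y [X FX Xx] [Y FY Yy].
      have [XY|YX] := Ftot _ _ FX FY.
      * have [[_ hs _] _ _] := gF _ _ FY Yy.
        by exists Y => //; apply: hs => //; apply: XY.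
      * have [[_ hs _] _ _] := gF _ _ FX Xx.
        by exists X => //; apply: hs => //; apply: YX.
    + move=> r x [X FX Xx]; have [[_ _ hm] _ _] := gF _ _ FX Xx.
      by exists X => //; apply: hm.
  - by move=> x Jx; exists X0 => //; apply: hJ0.
  - move=> m [X FX Xz]; have [_ _ h] := gF _ _ FX Xz; exact: (h m).
have [x0 Ax0] : exists x, A x.
  apply: NNPP => hne.
  apply: (maxA J); last by move=> _; split => // x.
  split; first by move=> x Ax; exfalso; apply: hne; exists x.
  by move=> hJA; apply: hne; exists 0; apply: hJA; case: hJ.
have [[hA0 hAs hAm] hJA hAz] := QA (ex_intro _ x0 Ax0).
have ext : forall a, ~ A a -> exists m u r, A u /\ z ^+ m = u + r * a.
  move=> a na.
  pose B := fun x => exists u r, A u /\ x = u + r * a.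
  have AB : (A `<` B)%classic.
    split; first by move=> x Ax; exists x, 0; rewrite mul0r addr0.
    by move=> BA; apply: na; apply: BA; exists 0, 1; rewrite add0r mul1r.
  have nQ := maxA B AB.
  have hB : is_ideal B.
    split.
    - by exists 0, 0; rewrite mul0r addr0.
    - move=> x y [u [r [Au ->]]] [v [s [Av ->]]].
      exists (u - v), (r - s); split; first exact: hAs.
      by rewrite mulrBl opprD addrACA.
    - move=> t x [u [r [Au ->]]]; exists (t * u), (t * r); split; first exact: hAm.
      by rewrite mulrDr mulrA.
  apply: NNPP => hn; apply: nQ => _; split => //.
  - by move=> x Jx; exists x, 0; rewrite mul0r addr0; split => //; apply: hJA.
  - by move=> m [u [r [Au e]]]; apply: hn; exists m, u, r.
exists A; split => //.
- move=> a b Aab; apply: NNPP => hn.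
  have na : ~ A a by move=> h; apply: hn; left.
  have nb : ~ A b by move=> h; apply: hn; right.
  have [m [u [r [Au em]]]] := ext a na.
  have [l [v [s [Av el]]]] := ext b nb.
  apply: (hAz (m + l)%N); rewrite exprD em el.
  have -> : (u + r * a) * (v + s * b) = u * (v + s * b) + (v * (r * a) + (r * s) * (a * b)).
    by ring.
  have hadd : forall x y : R, A x -> A y -> A (x + y).
  { idtac.
    move=> x y Ax Ay; rewrite -[y]opprK; apply: hAs => //.
    by rewrite -mulN1r; apply: hAm. }
  apply: (hadd); first by rewrite mulrC; apply: hAm.
  by apply: (hadd); [rewrite mulrC|]; apply: hAm.
- by move=> Az; apply: (hAz 1%N); rewrite expr1.
Qed.
End A.

Theorem theorem2p1 (R : comNzRingType) (n : nat) (I : R -> Prop)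
    (Is : 'I_n -> R -> Prop)
    (hI : is_ideal I) (hIs : forall k, is_ideal (Is k))
    (hcover : forall x, I x -> exists k, Is k x)
    (hrad : exists S : {set 'I_n},
        (#|S| <= 2)%N /\ forall k, k \notin S -> is_radical (Is k)) :
  exists k, forall x, I x -> Is k x.
Proof.
have I0 : I 0 by case: hI.
apply: NNPP => hno.
have hz : forall k, exists z, I z /\ ~ Is k z.
  move=> k; apply: NNPP => h; apply: hno; exists k => x Ix.
  by apply: NNPP => nx; apply: h; exists x.
case: n Is hIs hcover hrad hno hz => [|n] Is hIs hcover hrad hno hz.
  by case: (hcover 0 I0) => -[].
have [S [hS hSr]] := hrad.
have [z hzP] := choice hz.
have hP : forall k : 'I_n.+1, exists P : R -> Prop, k \notin S ->
    [/\ is_ideal P, (forall x, Is k x -> P x), is_prime P & ~ P (z k)].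
  move=> k; case: (boolP (k \in S)) => kS; first by exists (fun _ => True).
  have hzm : forall m, ~ Is k (z k ^+ m).
    move=> m hm; have [_ nz] := hzP k; apply: nz.
    by apply/(hSr k kS); exists m.
  have [P [h1 h2 h3 h4]] := exists_prime (hIs k) hzm.
  by exists P.
have [P hPP] := choice hP.
pose J k := if k \in S then Is k else P k.
pose f (j : nat) := J (inord j : 'I_n.+1).
have memS : forall j, (j < n.+1)%N -> (inord j : 'I_n.+1) \in S -> j \in map val (enum S).
  move=> j hj jS; apply/mapP; exists (inord j); [by rewrite mem_enum | by rewrite /= inordK].
have sz : (size (map val (enum S)) <= 2)%N by rewrite size_map -cardE.
have [a [b hab]] : exists a b, forall j, j \in map val (enum S) -> j = a \/ j = b.
  case: (map val (enum S)) sz => [|a0 [|b0 [|c0 t]]] // _.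
  - by exists 0%N, 0%N.
  - by exists a0, a0 => j; rewrite inE => /eqP; left.
  - by exists a0, b0 => j; rewrite !inE => /orP[/eqP|/eqP]; [left|right].
have H1 : forall j, (j < n.+1)%N -> is_ideal (f j).
  move=> j hj; rewrite /f /J; case: ifP => kS; first exact: hIs.
  by have [] := hPP _ (negbT kS).
have H2 : forall j, (j < n.+1)%N -> j <> a -> j <> b -> is_prime (f j).
  move=> j hj ja jb; rewrite /f /J; case: ifP => kS.
    by have [] := hab _ (memS _ hj kS).
  by have [] := hPP _ (negbT kS).
have H3 : forall x, I x -> exists2 j, (j < n.+1)%N & f j x.
  move=> x Ix; have [k hk] := hcover _ Ix; exists (nat_of_ord k) => //.
  rewrite /f inord_val /J; case: ifP => kS //.
  by have [_ h _ _] := hPP _ (negbT kS); apply: h.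
have [j hj hall] := @avoid R I hI n.+1 f a b H1 H2 H3.
have [Iz nz] := hzP (inord j); have := hall _ Iz.
  rewrite /f /J; case: ifP => kS //.
  by have [_ _ _ h] := hPP _ (negbT kS).
Qed.
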